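(* Let $(\boldsymbol{X},S,L,A,R)$ be as in the context, fix $l\in\mathcal{L}$ and $\epsilon\ge0$. For $\omega\in\mathbb{R}$ let $f^*_{l,\omega}$ be a decision function with $I\{f^*_{l,\omega}(\boldsymbol{Z})>0\}=I\{\delta_R(\boldsymbol{Z})-\omega I(L=l)\psi_l(S)>0\}$, and define $$G_l(\omega)=E\big[I(f^*_{l,\omega}(\boldsymbol{Z})>0)I(L=l)\psi_l(S)\big],\qquad V_l(\omega)=E\big[I(f^*_{l,\omega}(\boldsymbol{Z})>0)\delta_R(\boldsymbol{Z})\big].$$ Assume $G_l$ is continuous on $\mathbb{R}$ and conditions (C1) and (C4) below hold. Then: $G_l(\omega)$ is non-increasing in $\omega\in\mathbb{R}$; $V_l(\omega)$ is non-decreasing for $\omega\le0$ and non-increasing for $\omega>0$. Moreover, for a sufficiently large constant $K>0$: if $G_l(0)>\epsilon$, there exists $\omega^*_l\in(0,K)$ with $G_l(\omega^*_l)=\epsilon$; if $G_l(0)<-\epsilon$, there exists $\omega^*_l\in(-K,0)$ with $G_l(\omega^*_l)=-\epsilon$. (C1): $P(S=s\mid L=l)>c_0>0$ for all $s\in\{0,1\}$, $l\in\mathcal{L}$. (C4): the functions $f_0(\boldsymbol{z})=E(R\mid\boldsymbol{Z}=\boldsymbol{z},A=-1)$ and $f_1(\boldsymbol{z})=E(R\mid\boldsymbol{Z}=\boldsymbol{z},A=1)$ belong to the Hölder class $\mathcal{H}^\beta([0,1]^d,B_0)$ with $d=p+2$.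
   Context: $\boldsymbol{X}\in\mathbb{R}^p$ covariates, $S\in\{0,1\}$ sensitive attribute, $L$ categorical feature with finite range $\mathcal{L}$, $A\in\{1,-1\}$ treatment, $R$ outcome, $\boldsymbol{Z}=(\boldsymbol{X},S,L)$ (taking values in $[0,1]^d$, $d=p+2$, for (C4)). $\pi(s\mid l)=P(S=s\mid L=l)$, $\psi_l(S)=\frac{I(S=1)}{\pi(1\mid l)}-\frac{I(S=0)}{\pi(0\mid l)}$, $\delta_R(\boldsymbol{Z})=E[R\mid\boldsymbol{Z},A=1]-E[R\mid\boldsymbol{Z},A=-1]$. Hölder class: for $\beta=s+r$, $r\in(0,1]$, $s=\lfloor\beta\rfloor$ (largest integer strictly smaller than $\beta$), $\mathcal{H}^\beta([0,1]^d,B_0)$ is the set of $f:[0,1]^d\to\mathbb{R}$ with $\max_{\|\alpha\|_1\le s}\|\partial^\alpha f\|_\infty\le B_0$ and $\max_{\|\alpha\|_1=s}\sup_{x\ne y}|\partial^\alpha f(x)-\partial^\alpha f(y)|/\|x-y\|_2^r\le B_0$. *)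

(* Defs.v *)
From HB Require Import structures.
From mathcomp Require Import all_boot all_order all_algebra.
From mathcomp Require Import all_classical all_reals all_analysis.
Set Implicit Arguments. Unset Strict Implicit. Unset Printing Implicit Defensive.
Import Order.TTheory GRing.Theory Num.Theory.
Import numFieldNormedType.Exports.
Local Open Scope classical_set_scope.
Local Open Scope ring_scope.

Section Holder.
Variables (R : realType) (d : nat).

Definition evec (i : 'I_d) : 'rV[R]_d := delta_mx 0 i.

Definition dpart (i : 'I_d) (f : 'rV[R]_d -> R) : 'rV[R]_d -> R :=
  fun x => derive f x (evec i).

Definition dmulti (alpha : 'I_d -> nat) (f : 'rV[R]_d -> R) : 'rV[R]_d -> R :=
  foldr (fun i g => iter (alpha i) (dpart i) g) f (enum 'I_d).

Definition mabs (alpha : 'I_d -> nat) : nat := (\sum_(i < d) alpha i)%N.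

Definition enorm (x : 'rV[R]_d) : R := Num.sqrt (\sum_(i < d) (x 0 i) ^+ 2).

Definition closed_cube : set 'rV[R]_d := [set x | forall i, 0 <= x 0 i <= 1].
Definition open_cube : set 'rV[R]_d := [set x | forall i, 0 < x 0 i < 1].

(* f in H^beta([0,1]^d, B0), with beta = s + r, s integer, r in (0,1]
   (s = largest integer strictly smaller than beta).  Derivatives of order >= 1
   are taken at interior points of the cube. *)
Definition holder_class (beta B0 : R) (f : 'rV[R]_d -> R) : Prop :=
  exists s : nat, (s%:R < beta <= s.+1%:R) /\
   let r := beta - s%:R in
   let dom (k : nat) := if k == 0%N then closed_cube else open_cube in
   (forall alpha : 'I_d -> nat, (mabs alpha < s)%N ->
      forall (i : 'I_d) x, open_cube x -> derivable (dmulti alpha f) x (evec i)) /\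
   (forall alpha : 'I_d -> nat, (mabs alpha <= s)%N ->
      forall x, dom (mabs alpha) x -> `|dmulti alpha f x| <= B0) /\
   (forall alpha : 'I_d -> nat, mabs alpha = s ->
      forall x y, dom s x -> dom s y -> x != y ->
        `|dmulti alpha f x - dmulti alpha f y| / (enorm (x - y)) `^ r <= B0).

End Holder.

Section Setup.
Variables (dT : measure_display) (T : measurableType dT) (R : realType)
  (P : probability T R) (p : nat).

(* Z = (X, S, L) as a point of R^(p+2): coordinates 0..p-1 are X,
   coordinate p is S, coordinate p+1 is L. *)
Definition S_idx : 'I_(p.+2) := inord p.
Definition L_idx : 'I_(p.+2) := inord p.+1.
Definition Sz (z : 'rV[R]_(p.+2)) : R := z 0 S_idx.
Definition Lz (z : 'rV[R]_(p.+2)) : R := z 0 L_idx.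

Definition sigmaZ (Z : T -> 'rV[R]_(p.+2)) : set (set T) :=
  <<s [set E | exists (i : 'I_(p.+2)) (B : set R),
          measurable B /\ E = (fun w => Z w 0 i) @^-1` B] >>.

(* f is (a version of) z |-> E[Rv | Z = z, A = a] *)
Definition is_cond_exp (Z : T -> 'rV[R]_(p.+2)) (A Rv : T -> R) (a : R)
    (f : 'rV[R]_(p.+2) -> R) : Prop :=
  measurable_fun setT (f \o Z) /\
  forall E, sigmaZ Z E ->
    (\int[P]_(w in E `&` [set w | A w = a]) (Rv w)%:E =
     \int[P]_(w in E `&` [set w | A w = a]) (f (Z w))%:E)%E.

Definition ind (b : bool) : R := if b then 1 else 0.


Definition pi_cond (Z : T -> 'rV[R]_(p.+2)) (s l : R) : R :=
  fine (P [set w | Sz (Z w) = s /\ Lz (Z w) = l]) /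
  fine (P [set w | Lz (Z w) = l]).

Definition psi (Z : T -> 'rV[R]_(p.+2)) (l sv : R) : R :=
  ind (sv == 1) / pi_cond Z 1 l - ind (sv == 0) / pi_cond Z 0 l.

Definition Ex (X : T -> R) : R := fine ('E_P[X])%E.

End Setup.
Arguments ind {R} b.

(* Main.v *)
Require Import Defs.
From HB Require Import structures.
From mathcomp Require Import all_boot all_order all_algebra.
From mathcomp Require Import all_classical all_reals all_analysis.
From mathcomp Require Import lra measurable_realfun.
Import Order.TTheory GRing.Theory Num.Theory.
Import numFieldNormedType.Exports.
Local Open Scope classical_set_scope.
Local Open Scope ring_scope.

Section H.
Variable R : realType.

Lemma ptG (dd c o1 o2 : R) : o1 <= o2 ->
  ind (0 < dd - o2 * c) * c <= ind (0 < dd - o1 * c) * c.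
Proof.
move=> h; rewrite /ind; case: ifP => h2; case: ifP => h1; rewrite ?mul1r ?mul0r //.
  move/negbT: h1; rewrite -leNgt => h1. nra.
move/negbT: h2; rewrite -leNgt => h2. nra.
Qed.

Lemma ptVn (dd c o1 o2 : R) : o1 <= o2 -> o2 <= 0 ->
  ind (0 < dd - o1 * c) * dd <= ind (0 < dd - o2 * c) * dd.
Proof.
move=> h h0; rewrite /ind; case: ifP => h2; case: ifP => h1; rewrite ?mul1r ?mul0r //.
  move/negbT: h1; rewrite -leNgt => h1; have [hc|hc] := lerP 0 c; nra.
move/negbT: h2; rewrite -leNgt => h2; have [hc|hc] := lerP 0 c; nra.
Qed.

Lemma ptVp (dd c o1 o2 : R) : 0 < o1 -> o1 <= o2 ->
  ind (0 < dd - o2 * c) * dd <= ind (0 < dd - o1 * c) * dd.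
Proof.
move=> h0 h; rewrite /ind; case: ifP => h2; case: ifP => h1; rewrite ?mul1r ?mul0r //.
  move/negbT: h1; rewrite -leNgt => h1; have [hc|hc] := lerP 0 c; nra.
move/negbT: h2; rewrite -leNgt => h2; have [hc|hc] := lerP 0 c; nra.
Qed.
End H.
Section M.
Context (d : measure_display) (T : measurableType d) (R : realType) (P : probability T R).

Lemma int_bd (f : T -> R) (M : R) : measurable_fun setT f ->
  (forall x, `|f x| <= M) -> P.-integrable setT (EFin \o f).
Proof.
move=> mf bd; apply/integrableP; split; first exact/measurable_EFinP.
apply: le_lt_trans.
  apply: (integral_le_bound (`|M|)%:E) => //.
  - exact/measurable_EFinP.
  - by apply: aeW => z _; rewrite /= lee_fin (le_trans (bd z)) // ler_norm.
apply: lte_mul_pinfty => //.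
by rewrite (le_lt_trans (probability_le1 P measurableT)) ?ltry.
Qed.

Lemma Ex_le (X Y : T -> R) (M : R) : measurable_fun setT X -> measurable_fun setT Y ->
  (forall x, `|X x| <= M) -> (forall x, `|Y x| <= M) -> (forall x, X x <= Y x) ->
  Ex P X <= Ex P Y.
Proof.
move=> mX mY bX bY XY; rewrite /Ex unlock.
have iX := @int_bd X M mX bX; have iY := @int_bd Y M mY bY.
apply: fine_le; [exact: integrable_fin_num iX|exact: integrable_fin_num iY|].
by apply: le_integral => // x _; rewrite lee_fin.
Qed.

Lemma Ex0 : Ex P (fun _ => 0) = 0.
Proof. by rewrite /Ex (_ : (fun _ => 0) = cst 0) // expectation_cst. Qed.

Lemma Ex_le0 (X : T -> R) (M : R) : measurable_fun setT X -> 0 <= M ->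
  (forall x, `|X x| <= M) -> (forall x, X x <= 0) -> Ex P X <= 0.
Proof.
move=> mX M0 bX h; rewrite -Ex0; apply: (@Ex_le X (fun _ => 0) M mX (measurable_cst _) bX) => //.
by move=> _; rewrite normr0.
Qed.

Lemma Ex_ge0 (X : T -> R) (M : R) : measurable_fun setT X -> 0 <= M ->
  (forall x, `|X x| <= M) -> (forall x, 0 <= X x) -> 0 <= Ex P X.
Proof.
move=> mX M0 bX h; rewrite -Ex0; apply: (@Ex_le (fun _ => 0) X M (measurable_cst _) mX _ bX) => //.
by move=> _; rewrite normr0.
Qed.

Lemma mind (g : T -> R) : measurable_fun setT g ->
  measurable_fun setT (fun w => (ind (0 < g w) : R)).
Proof.
move=> mg; rewrite /ind; apply: measurable_fun_ifT => //.
exact: measurable_fun_ltr.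
Qed.

Lemma mindeq (g : T -> R) c : measurable_fun setT g ->
  measurable_fun setT (fun w => (ind (g w == c) : R)).
Proof.
move=> mg; rewrite /ind; apply: measurable_fun_ifT => //.
exact: measurable_fun_eqr.
Qed.
End M.

Lemma ptneg (R : realType) (dd c b : R) : (c <= 0 \/ dd <= b * c) ->
  ind (0 < dd - b * c) * c <= 0.
Proof.
rewrite /ind; case: ifP => h; rewrite ?mul1r ?mul0r //; case=> // h2; lra.
Qed.

Lemma ptpos (R : realType) (dd c b : R) : (0 <= c \/ dd <= b * c) ->
  0 <= ind (0 < dd - b * c) * c.
Proof.
rewrite /ind; case: ifP => h; rewrite ?mul1r ?mul0r //; case=> // h2; lra.
Qed.

Lemma normind (R : realType) b (x : R) : `|ind b * x| <= `|x|.
Proof. by rewrite /ind; case: b; rewrite ?mul1r ?mul0r ?normr0. Qed.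

Lemma holder_bd (R : realType) n (beta B0 : R) (f : 'rV[R]_n -> R) :
  holder_class beta B0 f -> forall x, closed_cube x -> `|f x| <= B0.
Proof.
move=> [s [_ [_ [hb _]]]] x hx.
have h0 : mabs (fun _ : 'I_n => 0%N) = 0%N by rewrite /mabs big1.
have := hb (fun _ => 0%N) _ x; rewrite h0 /= => /(_ isT hx).
suff -> : dmulti (fun _ : 'I_n => 0%N) f = f by [].
by rewrite /dmulti; elim: (enum 'I_n) => //= i s' ->.
Qed.
Theorem lemma1 (dT : measure_display) (T : measurableType dT) (R : realType)
  (P : probability T R) (p : nat)
  (Z : T -> 'rV[R]_(p.+2)) (A Rv : T -> R)
  (f0 f1 : 'rV[R]_(p.+2) -> R) (beta B0 : R)
  (fstar : R -> 'rV[R]_(p.+2) -> R) (l eps : R) :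
  (* standing set-up *)
  (forall i : 'I_(p.+2), measurable_fun setT (fun w => Z w 0 i)) ->
  (forall w, closed_cube (Z w)) ->
  (forall w, Sz (Z w) = 0 \/ Sz (Z w) = 1) ->
  finite_set (range (fun w => Lz (Z w))) ->
  measurable_fun setT A -> (forall w, A w = 1 \/ A w = -1) ->
  measurable_fun setT Rv -> P.-integrable setT (fun w => (Rv w)%:E) ->
  is_cond_exp P Z A Rv (-1) f0 ->
  is_cond_exp P Z A Rv 1 f1 ->
  (* l in the range of L, eps >= 0 *)
  range (fun w => Lz (Z w)) l -> 0 <= eps ->
  (* the decision functions f*_{l,omega} *)
  (forall (om : R) (z : 'rV[R]_(p.+2)),
     (0 < fstar om z) =
     (0 < (f1 z - f0 z) - om * ind (Lz z == l) * psi P Z l (Sz z))) ->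
  (* G_l continuous *)
  continuous (fun om : R =>
     Ex P (fun w => ind (0 < fstar om (Z w)) * ind (Lz (Z w) == l)
                      * psi P Z l (Sz (Z w)))) ->
  (* (C1) *)
  (exists c0 : R, 0 < c0 /\
     forall s l', (s = 0 \/ s = 1) -> range (fun w => Lz (Z w)) l' ->
       c0 < pi_cond P Z s l') ->
  (* (C4) *)
  0 < beta ->
  holder_class beta B0 f0 -> holder_class beta B0 f1 ->
  let G := fun om : R =>
     Ex P (fun w => ind (0 < fstar om (Z w)) * ind (Lz (Z w) == l)
                      * psi P Z l (Sz (Z w))) in
  let V := fun om : R =>
     Ex P (fun w => ind (0 < fstar om (Z w)) * (f1 (Z w) - f0 (Z w))) in
  (forall om1 om2 : R, om1 <= om2 -> G om2 <= G om1) /\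
  (forall om1 om2 : R, om1 <= om2 -> om2 <= 0 -> V om1 <= V om2) /\
  (forall om1 om2 : R, 0 < om1 -> om1 <= om2 -> V om2 <= V om1) /\
  (exists K0 : R, 0 < K0 /\ forall K : R, K0 <= K ->
     (G 0 > eps -> exists om, 0 < om < K /\ G om = eps) /\
     (G 0 < - eps -> exists om, - K < om < 0 /\ G om = - eps)).
Proof.
move=> hZ hcube hS hfin hA hA2 hRv hRint hc0 hc1 hl heps hfs hcont
  [c0 [c0pos hC1]] hbeta hh0 hh1 G V.
set pi1 := pi_cond P Z 1 l; set pi0 := pi_cond P Z 0 l.
have p1 : 0 < pi1 by apply: lt_trans c0pos (hC1 1 l (or_intror erefl) hl).
have p0 : 0 < pi0 by apply: lt_trans c0pos (hC1 0 l (or_introl erefl) hl).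
pose dZ w := f1 (Z w) - f0 (Z w).
pose cZ w := ind (Lz (Z w) == l) * psi P Z l (Sz (Z w)).
have mdZ : measurable_fun setT dZ by apply: measurable_funB; [exact: hc1.1|exact: hc0.1].
have mL : measurable_fun setT (fun w => Lz (Z w)) by exact: hZ.
have mS : measurable_fun setT (fun w => Sz (Z w)) by exact: hZ.
have mc : measurable_fun setT cZ.
  apply: measurable_funM; first exact: mindeq.
  rewrite /psi; apply: measurable_funB; apply: measurable_funM => //; exact: mindeq.
pose Mc := pi1^-1 + pi0^-1.
have Mc0 : 0 < Mc by rewrite /Mc addr_gt0 // invr_gt0.
have ctri : forall w, cZ w = 0 \/ cZ w = pi1^-1 \/ cZ w = - pi0^-1.
  move=> w; rewrite /cZ /psi -/pi1 -/pi0.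
  case: (Lz (Z w) == l); rewrite /ind ?mul0r; last by left.
  case: (hS w) => ->; rewrite eqxx ?oner_eq0 ?(eq_sym 0 1) ?oner_eq0 /= !mul1r ?mul0r.
    by right; right; rewrite add0r.
  by right; left; rewrite subr0.
have cbd : forall w, `|cZ w| <= Mc.
  move=> w; have i1 : 0 < pi1^-1 by rewrite invr_gt0.
  have i0 : 0 < pi0^-1 by rewrite invr_gt0.
  case: (ctri w) => [->|[->|->]]; rewrite ?normr0 ?normrN ?gtr0_norm // /Mc; lra.
pose Md := `|B0| + `|B0|.
have dbd : forall w, `|dZ w| <= Md.
  move=> w; rewrite /dZ (le_trans (ler_normB _ _)) // lerD //.
    by rewrite (le_trans (@holder_bd _ _ _ _ _ hh1 _ (hcube w))) // ler_norm.
  by rewrite (le_trans (@holder_bd _ _ _ _ _ hh0 _ (hcube w))) // ler_norm.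
have Md0 : 0 <= Md by rewrite /Md addr_ge0.
have eG : forall om, G om = Ex P (fun w => ind (0 < dZ w - om * cZ w) * cZ w).
  move=> om; rewrite /G; congr Ex; apply: funext => w.
  by rewrite hfs /dZ /cZ !mulrA.
have eV : forall om, V om = Ex P (fun w => ind (0 < dZ w - om * cZ w) * dZ w).
  move=> om; rewrite /V; congr Ex; apply: funext => w.
  by rewrite hfs /dZ /cZ !mulrA.
have mi : forall om, measurable_fun setT (fun w => (ind (0 < dZ w - om * cZ w) : R)).
  move=> om; apply: mind; apply: measurable_funB => //.
  exact: measurable_funM.
have mGi : forall om, measurable_fun setT (fun w => ind (0 < dZ w - om * cZ w) * cZ w).
  by move=> om; apply: measurable_funM.
have mVi : forall om, measurable_fun setT (fun w => ind (0 < dZ w - om * cZ w) * dZ w).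
  by move=> om; apply: measurable_funM.
have bGi : forall om w, `|ind (0 < dZ w - om * cZ w) * cZ w| <= Mc.
  by move=> om w; apply: le_trans (normind _ _ _) (cbd w).
have bVi : forall om w, `|ind (0 < dZ w - om * cZ w) * dZ w| <= Md.
  by move=> om w; apply: le_trans (normind _ _ _) (dbd w).
have b0c : forall w : T, `|(0:R)| <= Mc by move=> _; rewrite normr0 ltW.
split.
  move=> o1 o2 h; rewrite !eG; apply: (@Ex_le _ _ _ _ _ _ Mc) => // w.
  exact: ptG.
split.
  move=> o1 o2 h h0; rewrite !eV; apply: (@Ex_le _ _ _ _ _ _ Md) => // w.
  exact: ptVn.
split.
  move=> o1 o2 h h0; rewrite !eV; apply: (@Ex_le _ _ _ _ _ _ Md) => // w.
  exact: ptVp.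
exists (2 * (Md * pi1 + Md * pi0 + 1)); split.
  have : 0 <= Md * pi1 by rewrite mulr_ge0 // ltW.
  have : 0 <= Md * pi0 by rewrite mulr_ge0 // ltW.
  move=> a1 a2; clear -a1 a2 Md0; lra.
move=> K hK.
have q1 : 0 <= Md * pi1 by rewrite mulr_ge0 // ltW.
have q0 : 0 <= Md * pi0 by rewrite mulr_ge0 // ltW.
pose b := K / 2.
have hb1 : Md * pi1 <= b by rewrite /b; clear -q1 q0 hK; lra.
have hb0 : Md * pi0 <= b by rewrite /b; clear -q1 q0 hK; lra.
have hbK : 0 < b < K by rewrite /b; apply/andP; split; clear -q1 q0 hK; lra.
have ip1 : pi1^-1 * pi1 = 1 by rewrite mulVf // gt_eqF.
have ip0 : pi0^-1 * pi0 = 1 by rewrite mulVf // gt_eqF.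
have i1 : 0 < pi1^-1 by rewrite invr_gt0.
have i0 : 0 < pi0^-1 by rewrite invr_gt0.
have Gb : G b <= 0.
  rewrite eG; apply: (@Ex_le0 _ _ _ _ _ Mc (mGi _) (ltW Mc0) (bGi _)) => w.
  apply: ptneg; case: (ctri w) => [->|[->|->]]; first by left.
    right; have := dbd w; rewrite ler_norml => /andP[_ h].
    apply: le_trans h _; rewrite -[Md](mulfK (lt0r_neq0 p1)); by rewrite ler_pM2r.
  by left; rewrite oppr_le0 ltW.
have Gnb : 0 <= G (- b).
  rewrite eG; apply: (@Ex_ge0 _ _ _ _ _ Mc (mGi _) (ltW Mc0) (bGi _)) => w.
  apply: ptpos; case: (ctri w) => [->|[->|->]]; first by left.
    by left; rewrite ltW.
  right; have := dbd w; rewrite ler_norml => /andP[_ h].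
  apply: le_trans h _; rewrite mulrNN -[Md](mulfK (lt0r_neq0 p0)); by rewrite ler_pM2r.
have cG : continuous G by exact: hcont.
split.
  move=> hG0.
  have [om hom Gom] : exists2 om, om \in `[0, b] & G om = eps.
    apply: IVT; first by case/andP: hbK => /ltW.
      exact: continuous_subspaceT.
    rewrite ge_min le_max; apply/andP; split; apply/orP; [right|left].
      exact: le_trans Gb heps.
    exact: ltW.
  exists om; split => //.
  move: hom; rewrite in_itv /= => /andP[h1 h2].
  have : om != 0 by apply/eqP => h0; move: hG0; rewrite -h0 Gom ltxx.
  move/andP: hbK => [hb hbk].
  rewrite neq_lt => /orP[h3|h3]; apply/andP; split; clear -h1 h2 h3 hb hbk; lra.
move=> hG0.
have [om hom Gom] : exists2 om, om \in `[- b, 0] & G om = - eps.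
  apply: IVT; first by case/andP: hbK => h _; rewrite oppr_le0 ltW.
    exact: continuous_subspaceT.
  rewrite ge_min le_max; apply/andP; split; apply/orP; [right|left].
    exact: ltW.
  by apply: le_trans Gnb; rewrite oppr_le0.
exists om; split => //.
move: hom; rewrite in_itv /= => /andP[h1 h2].
have : om != 0 by apply/eqP => h0; move: hG0; rewrite -h0 Gom ltxx.
move/andP: hbK => [hb hbk].
rewrite neq_lt => /orP[h3|h3]; apply/andP; split; clear -h1 h2 h3 hb hbk; lra.
Qed.
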